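(* For every $d \in \mathbb{Z}_{>0}$, one has $\mathrm{rc}_\ell(\Delta_d) \le \lceil d/2 \rceil + 2$, where $\Delta_d = \{0, e_1, \dots, e_d\} \subseteq \mathbb{Z}^d$.
   Context: For $X, Y \subseteq \mathbb{Z}^d$, $\mathrm{rc}(X,Y)$ is the smallest number of inequalities in a linear system $Ax \le b$ satisfied by all points of $X$ and such that each point of $Y\setminus X$ violates at least one inequality. With $B_t = [-t,t]^d\cap\mathbb{Z}^d$, $\mathrm{rc}_\ell(X) = \max_{t\in\mathbb{Z}_{>0}} \mathrm{rc}(X,B_t)$. $e_i$ denotes the $i$-th standard unit vector. *)

(* Defs.v *)
From mathcomp Require Import all_boot all_order all_algebra.
From mathcomp Require Import reals.
Set Implicit Arguments. Unset Strict Implicit. Unset Printing Implicit Defensive.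
Import Order.TTheory GRing.Theory Num.Theory.
Local Open Scope ring_scope.

Definition ptset (d : nat) := 'rV[int]_d -> Prop.

Definition unitvec (d : nat) (i : 'I_d) : 'rV[int]_d := \row_j (i == j)%:R.

Definition Delta (d : nat) : ptset d :=
  fun x => x = 0 \/ exists i : 'I_d, x = unitvec i.

Definition Bbox (d : nat) (t : int) : ptset d :=
  fun x => forall j : 'I_d, `|x 0 j| <= t.

Definition satisfies (R : realType) (d k : nat) (A : 'M[R]_(k, d)) (b : 'I_k -> R)
  (x : 'rV[int]_d) : Prop :=
  forall i : 'I_k, \sum_(j < d) A i j * (x 0 j)%:~R <= b i.

Definition is_relaxation (R : realType) (d k : nat) (X Y : ptset d)
  (A : 'M[R]_(k, d)) (b : 'I_k -> R) : Prop :=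
  (forall x, X x -> satisfies A b x) /\
  (forall y, Y y -> ~ X y -> exists i : 'I_k,
       b i < \sum_(j < d) A i j * (y 0 j)%:~R).

Definition has_relaxation_of_size (R : realType) (d : nat) (X Y : ptset d) (k : nat) :=
  exists (A : 'M[R]_(k, d)) (b : 'I_k -> R), is_relaxation X Y A b.

(* rc_is X Y r  <->  r = rc(X,Y), i.e. r is the smallest number of
   inequalities of such a system (and such a system exists). *)
Definition rc_is (R : realType) (d : nat) (X Y : ptset d) (r : nat) : Prop :=
  @has_relaxation_of_size R d X Y r /\
  (forall k, @has_relaxation_of_size R d X Y k -> (r <= k)%N).

(* rcl_is X r  <->  r = rc_l(X) = max_{t in Z_{>0}} rc(X, B_t)
   (all rc(X,B_t) exist, are <= r, and r is attained). *)
Definition rcl_is (R : realType) (d : nat) (X : ptset d) (r : nat) : Prop :=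
  (forall t : int, 0 < t -> exists rt, @rc_is R d X (@Bbox d t) rt /\ (rt <= r)%N) /\
  (exists t : int, 0 < t /\ @rc_is R d X (@Bbox d t) r).

(* Main.v *)
Require Import Defs.
From mathcomp Require Import all_boot all_order all_algebra.
From mathcomp Require Import reals.
From mathcomp Require Import zify boolp.
Set Implicit Arguments. Unset Strict Implicit. Unset Printing Implicit Defensive.
Import Order.TTheory GRing.Theory Num.Theory.
Local Open Scope ring_scope.

Lemma sum_le1 (I : finType) (P : pred I) (F : I -> int) :
  (forall i, P i -> 0 <= F i) -> \sum_(i | P i) F i <= 1 ->
  (forall i, P i -> F i = 0) \/
  exists i0, [/\ P i0, F i0 = 1 & forall i, P i -> i != i0 -> F i = 0].
Proof.
move=> h0 h1.
case: (boolP [exists i, P i && (F i != 0)]) => [/existsP [i0 /andP [Pi0 nz]] | /existsPn hall]; last first.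
  by left => i Pi; move: (hall i); rewrite Pi /= negbK => /eqP.
right; exists i0.
rewrite (bigD1 i0) //= in h1.
have hr : 0 <= \sum_(i | P i && (i != i0)) F i.
  by apply: sumr_ge0 => i /andP [Pi _]; apply: h0.
have hF := h0 _ Pi0.
move/eqP: nz => nz. move: h1 hr; set S := \sum_(i | _) _ => h1 hr. have {}h1 : F i0 + S <= 1 by exact h1. have {}hr : 0 <= S by exact hr. have F1 : F i0 = 1 by lia.
split => //.
have rest0 : S = 0 by lia.
move=> i Pi ne.
apply: (psumr_eq0P _ rest0); last by rewrite Pi ne.
by move=> j /andP [Pj _]; apply: h0.
Qed.

Lemma term_le_sum (I : finType) (P : pred I) (F : I -> int) i0 :
  (forall i, P i -> 0 <= F i) -> P i0 -> F i0 <= \sum_(i | P i) F i.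
Proof.
move=> h0 Pi0; rewrite (bigD1 i0) //= lerDl.
by apply: sumr_ge0 => i /andP [Pi _]; apply: h0.
Qed.

Lemma sum_norm_bound (d : nat) (P : pred 'I_d) (F : 'I_d -> int) (c : int) :
  (forall j, P j -> `|F j| <= c) -> 0 <= c ->
  `|\sum_(j < d | P j) F j| <= d%:Z * c.
Proof.
move=> hF hc.
have h1 := ler_norm_sum (index_enum 'I_d) F P.
apply: (le_trans h1).
rewrite big_mkcond /=.
have h2 : \sum_(j < d) (if P j then `|F j| else 0) <= \sum_(j < d) c.
  by apply: ler_sum => j _; case: ifP => Pj //; apply: hF.
apply: (le_trans h2).
by rewrite sumr_const card_ord -mulr_natl natz.
Qed.

Lemma core (d k : nat) (t N K : int) (Y : nat -> int) :
  0 < t -> (k <= d)%N -> (d <= k + k)%N ->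
  (forall j, -t <= Y j <= t) -> (forall j, (d <= j)%N -> Y j = 0) ->
  (forall p, (p < k)%N -> 0 <= (t + 1) * Y p + Y (k + p)%N) ->
  N = d%:Z * ((t + 1) ^+ d * t) + 1 -> K = N * (d%:Z * t) + N + 1 ->
  K * (\sum_(j < d | (j < k)%N) Y j)
    + \sum_(j < d | ~~ (j < k)%N) (t + 1) ^+ (j - k) * Y j
    - N * (\sum_(j < d | ~~ (j < k)%N) Y j) <= K ->
  K * (\sum_(j < d | (j < k)%N) Y j + \sum_(j < d | ~~ (j < k)%N) Y j)
    - N * (\sum_(j < d | ~~ (j < k)%N) Y j)
    - \sum_(j < d | ~~ (j < k)%N) (t + 1) ^+ (j - k) * Y j <= K ->
  (forall j, Y j = 0) \/ exists i, (i < d)%N /\ forall j, Y j = (j == i)%:R.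
Proof.
move=> ht hkd hdk hY hYd hP hN hK.
set A := \sum_(j < d | (j < k)%N) Y j.
set B := \sum_(j < d | ~~ (j < k)%N) Y j.
set W := \sum_(j < d | ~~ (j < k)%N) _.
move=> hGA hGS.
have hY0 : forall p, (p < k)%N -> 0 <= Y p.
  move=> p hp; have := hP p hp; case/andP: (hY (k + p)%N) => h1 h2.
  case/andP: (hY p) => h3 h4. nia.
have hX : 0 <= (t + 1) ^+ d * t by apply: mulr_ge0; [apply: exprn_ge0|]; lia.
have hdX : 0 <= d%:Z * ((t + 1) ^+ d * t) by apply: mulr_ge0.
have hdt : 0 <= d%:Z * t by apply: mulr_ge0; lia.
have hN0 : 0 <= N by lia.
have hNdt : 0 <= N * (d%:Z * t) by apply: mulr_ge0.
have hK0 : 0 <= K by lia.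
have hBn : `|B| <= d%:Z * t.
  apply: sum_norm_bound; last by lia.
  by move=> j _; rewrite ler_norml.
have hWn : `|W| <= d%:Z * ((t + 1) ^+ d * t).
  apply: sum_norm_bound => // j _.
  rewrite normrM ger0_norm; last by apply: exprn_ge0; lia.
  apply: ler_pM; [by apply: exprn_ge0; lia | by [] | | by rewrite ler_norml].
  apply: ler_weXn2l; first by lia.
  by apply: leq_trans (leq_subr _ _) (ltnW (ltn_ord j)).
move: hBn hWn; rewrite !ler_norml => /andP [hB1 hB2] /andP [hW1 hW2].
have hNB1 : N * B <= N * (d%:Z * t) by apply: ler_wpM2l.
have hNB2 : N * (- (d%:Z * t)) <= N * B by apply: ler_wpM2l.
rewrite mulrN in hNB2.
have hA0 : 0 <= A by apply: sumr_ge0 => j hj; apply: hY0.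
have hA1 : A <= 1.
  rewrite leNgt; apply/negP => hA2.
  have hA2' : 2 <= A by lia.
  have := ler_wpM2l hK0 hA2'. lia.
have hAB : A + B <= 1.
  rewrite leNgt; apply/negP => hA2.
  have hA2' : 2 <= A + B by lia.
  have := ler_wpM2l hK0 hA2'. lia.
have [hA|hA] : A = 0 \/ A = 1 by lia.
- have hak : forall p, (p < k)%N -> Y p = 0.
    move=> p hp; have hpd : (p < d)%N := leq_trans hp hkd.
    have h := psumr_eq0P (P := fun j : 'I_d => (j < k)%N) (F := fun j : 'I_d => Y j)
      (fun j hj => hY0 j hj).
    have := h hA (Ordinal hpd) hp. by [].
  have hbnn : forall j : 'I_d, ~~ (j < k)%N -> 0 <= Y j.
    move=> j hj; rewrite -leqNgt in hj.
    have hjk : (j - k < k)%N by have := ltn_ord j; lia.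
    by have := hP _ hjk; rewrite hak // mulr0 add0r subnKC.
  have hB1' : B <= 1 by lia.
  case: (sum_le1 hbnn hB1') => [hall | [i0 [Pi0 Yi0 hoth]]].
    left => j; case: (ltnP j k) => hjk; first exact: hak.
    case: (ltnP j d) => hjd; last exact: hYd.
    by apply: (hall (Ordinal hjd)); rewrite /= -leqNgt.
  right; exists i0; split; first exact: ltn_ord.
  move=> j; case: (eqVneq j i0) => [->|hne]; first by rewrite Yi0.
  rewrite /=.
  case: (ltnP j k) => hjk; first exact: hak.
  case: (ltnP j d) => hjd; last exact: hYd.
  apply: (hoth (Ordinal hjd)); first by rewrite /= -leqNgt.
  by rewrite -val_eqE /=.
- have hA1' : \sum_(j < d | (j < k)%N) Y j <= 1 by rewrite -/A hA.
  case: (sum_le1 (P := fun j : 'I_d => (j < k)%N) (F := fun j : 'I_d => Y j) (fun (j : 'I_d) (hj : (j < k)%N) => hY0 j hj) hA1') => [hall | [p0 [Pp0 Yp0 hoth]]].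
    have : A = 0 by rewrite /A big1.
    lia.
  have hak : forall p, (p < k)%N -> p != p0 -> Y p = 0.
    move=> p hp hne; have hpd : (p < d)%N := leq_trans hp hkd.
    by apply: (hoth (Ordinal hpd)) => //; rewrite -val_eqE /=.
  set j0 := (k + p0)%N.
  have hbnn : forall j, ~~ (j < k)%N -> j != j0 -> 0 <= Y j.
    move=> j hj hne; rewrite -leqNgt in hj.
    case: (ltnP j d) => hjd; last by rewrite hYd.
    have hjk : (j - k < k)%N by lia.
    have hne' : (j - k)%N != p0.
      by apply/eqP => e; move: hne; rewrite /j0 -e subnKC // eqxx.
    by have := hP _ hjk; rewrite hak // mulr0 add0r subnKC.
  rewrite hA in hGA hGS.
  have hB0 : B <= 0.
    rewrite leNgt; apply/negP => hBp.
    have hB1' : 1 <= B by lia.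
    have := ler_wpM2l hK0 hB1'. lia.
  have hBz : B = 0.
    apply/eqP; rewrite eq_le hB0 /=; rewrite leNgt; apply/negP => hBn.
    have hB1' : B <= -1 by lia.
    have := ler_wpM2l hN0 hB1'. lia.
  rewrite hBz mulr0 in hGA hGS.
  have hW0 : W = 0 by lia.
  case: (lerP 0 (Y j0)) => hj0.
    have hbnn' : forall j : 'I_d, ~~ (j < k)%N -> 0 <= Y j.
      move=> j hj; case: (eqVneq (val j) j0) => [->|hne] //.
      exact: hbnn.
    have hb0 := psumr_eq0P hbnn' hBz.
    right; exists p0; split; first exact: ltn_ord.
    move=> j; case: (eqVneq j p0) => [->|hne]; first by rewrite Yp0.
    rewrite /=.
    case: (ltnP j k) => hjk; first exact: hak.
    case: (ltnP j d) => hjd; last exact: hYd.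
    by apply: (hb0 (Ordinal hjd)); rewrite /= -leqNgt.
  exfalso.
  have hj0d : (j0 < d)%N.
    rewrite ltnNge; apply/negP => /hYd e; rewrite e in hj0.
    by rewrite ltxx in hj0.
  set o0 := Ordinal hj0d.
  have ho0 : ~~ (o0 < k)%N by rewrite /= -leqNgt leq_addr.
  have eB : B = Y j0 + \sum_(j < d | ~~ (j < k)%N && (j != o0)) Y j.
    by rewrite /B (bigD1 o0).
  have eW : W = (t + 1) ^+ p0 * Y j0 +
      \sum_(j < d | ~~ (j < k)%N && (j != o0)) (t + 1) ^+ (j - k) * Y j.
    by rewrite /W (bigD1 o0) //= /j0 addKn.
  move: eB eW.
  set S := \sum_(j < d | _ && _) Y j.
  set T := \sum_(j < d | _ && _) _ * _.
  move=> eB eW.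
  have {}eB : B = Y j0 + S by exact: eB.
  have {}eW : W = (t + 1) ^+ p0 * Y j0 + T by exact: eW.
  have hSnn : forall j : 'I_d, ~~ (j < k)%N && (j != o0) -> 0 <= Y j.
    move=> j /andP [hj hne1]; apply: (hbnn _ hj).
    by move: hne1; rewrite -val_eqE.
  have hX1 : 1 <= (t + 1) ^+ p0 by apply: exprn_ege1; lia.
  have hX0 : 0 <= (t + 1) ^+ p0 by lia.
  case/andP: (hY j0) => hYl hYu.
  have hm : (t + 1) ^+ p0 * Y j0 <= (t + 1) ^+ p0 * -1.
    by apply: ler_wpM2l => //; lia.
  have hm2 : (t + 1) ^+ p0 * - t <= (t + 1) ^+ p0 * Y j0.
    by apply: ler_wpM2l.
  rewrite mulrN mulr1 in hm; rewrite mulrN in hm2.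
  case: (boolP [exists j1 : 'I_d, [&& ~~ (j1 < k)%N, j1 != o0, (j0 < j1)%N & Y j1 != 0]]).
    case/existsP => j1 /and4P [hj1k hj1o hlt hnz].
    have hY1 : 1 <= Y j1.
      have : 0 <= Y j1 by apply: hSnn; rewrite hj1k hj1o.
      move/eqP: hnz => hnz. lia.
    have hT1 : (t + 1) ^+ (j1 - k) * Y j1 <= T.
      apply: (term_le_sum (P := fun j : 'I_d => ~~ (j < k)%N && (j != o0))
                (F := fun j : 'I_d => (t + 1) ^+ (j - k) * Y j)); last by rewrite hj1k hj1o.
      move=> j hj; apply: mulr_ge0; [by apply: exprn_ge0; lia | exact: hSnn].
    have hT2 : (t + 1) ^+ (j1 - k) * 1 <= (t + 1) ^+ (j1 - k) * Y j1.
      by apply: ler_wpM2l => //; apply: exprn_ge0; lia.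
    have hT3 : (t + 1) ^+ p0.+1 <= (t + 1) ^+ (j1 - k).
      by apply: ler_weXn2l; [lia | rewrite /j0 in hlt; lia].
    rewrite exprS mulr1 in hT3 hT2.
    lia.
  move/existsPn => hall.
  have hHT : (t + 1) * T <= (t + 1) ^+ p0 * S.
    rewrite /T /S !mulr_sumr; apply: ler_sum => j /andP [hjk hjo].
    have hYj : 0 <= Y j by apply: hSnn; rewrite hjk hjo.
    case: (ltnP j0 j) => hlt.
      have : Y j = 0.
        by move: (hall j); rewrite hjk hjo hlt /= negbK => /eqP.
      by move=> ->; rewrite !mulr0.
    rewrite mulrA -exprS; apply: ler_wpM2r => //.
    apply: ler_weXn2l; first by lia.
    have hne : (j : nat) != j0 by move: hjo; rewrite -val_eqE.
    rewrite -leqNgt in hjk; rewrite /j0 in hlt hne.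
    move/eqP: hne => hne. lia.
  have eS : S = - Y j0 by lia.
  have eT : T = - ((t + 1) ^+ p0 * Y j0) by lia.
  rewrite eS mulrN in hHT.
  have hT0 : 0 <= T by lia.
  have := ler_wpM2r hT0 (_ : 1 <= t). lia.
Qed.

Lemma sum_pick (d p : nat) (c : int) :
  \sum_(j < d) (if (val j == p) then c else 0) = if (p < d)%N then c else 0.
Proof. by rewrite -big_mkcond /= big_ord1_eq. Qed.

Definition Nv (d : nat) (t : int) : int := d%:Z * ((t + 1) ^+ d * t) + 1.
Definition Kv (d : nat) (t : int) : int := Nv d t * (d%:Z * t) + Nv d t + 1.

Definition coefT (d k : nat) (t : int) (i j : nat) : int :=
  if (i < k)%N then (if j == i then - (t + 1) else if j == (k + i)%N then -1 else 0)
  else if i == k then (if (j < k)%N then Kv d t else (t + 1) ^+ (j - k) - Nv d t)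
  else (if (j < k)%N then Kv d t else Kv d t - Nv d t - (t + 1) ^+ (j - k)).

Definition rhsT (d k : nat) (t : int) (i : nat) : int :=
  if (i < k)%N then 0 else Kv d t.

Lemma construct (R : realType) (d : nat) (t : int) : (0 < d)%N -> 0 < t ->
  @has_relaxation_of_size R d (@Delta d) (@Bbox d t) ((d.+1)./2).+2.
Proof.
move=> hd ht.
set k := (d.+1)./2.
have hkd : (k <= d)%N.
  have := odd_double_half d.+1; rewrite -/k -addnn.
  by case: (odd d.+1) => /=; lia.
have hdk : (d <= k + k)%N.
  have := odd_double_half d.+1; rewrite -/k -addnn.
  by case: (odd d.+1) => /=; lia.
have hN0 : 0 <= Nv d t.
  rewrite /Nv; have : 0 <= d%:Z * ((t + 1) ^+ d * t).
    by apply: mulr_ge0 => //; apply: mulr_ge0; [apply: exprn_ge0|]; lia.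
  lia.
have hK0 : 0 <= Kv d t.
  rewrite /Kv; have : 0 <= Nv d t * (d%:Z * t) by apply: mulr_ge0 => //; apply: mulr_ge0; lia.
  lia.
have hpowN : forall j, (j <= d)%N -> (t + 1) ^+ j < Nv d t.
  move=> j hj.
  have h1 : (t + 1) ^+ j <= (t + 1) ^+ d by apply: ler_weXn2l => //; lia.
  have hP0 : 0 <= (t + 1) ^+ d by apply: exprn_ge0; lia.
  have h2 : (t + 1) ^+ d * 1 <= (t + 1) ^+ d * t by apply: ler_wpM2l => //; lia.
  have hPt : 0 <= (t + 1) ^+ d * t by apply: mulr_ge0 => //; lia.
  have h3 : 1 * ((t + 1) ^+ d * t) <= d%:Z * ((t + 1) ^+ d * t).
    by apply: ler_wpM2r => //; lia.
  rewrite /Nv; rewrite mulr1 mul1r in h2 h3; lia.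
exists (\matrix_(i < k.+2, j < d) (coefT d k t i j)%:~R).
exists (fun i => (rhsT d k t i)%:~R).
have hsum : forall (x : 'rV[int]_d) (i : 'I_k.+2),
    \sum_(j < d) (\matrix_(i0 < k.+2, j0 < d) (coefT d k t i0 j0)%:~R : 'M[R]_(k.+2, d)) i j * (x 0 j)%:~R
    = (\sum_(j < d) coefT d k t i j * x 0 j)%:~R.
  by move=> x i; rewrite rmorph_sum; apply: eq_bigr => j _; rewrite mxE rmorphM.
split.
  move=> x hx i; rewrite hsum ler_int.
  case: hx => [-> | [i0 ->]].
    rewrite big1 => [|j _]; last by rewrite mxE mulr0.
    by rewrite /rhsT; case: ifP.
  rewrite (bigD1 i0) //= mxE eqxx mulr1 big1 ?addr0 => [|j hj]; last first.
    by rewrite mxE eq_sym (negbTE hj) mulr0.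
  rewrite /coefT /rhsT.
  case: ifP => hik.
    by case: ifP => _; [lia | case: ifP => _; lia].
  case: ifP => hik2.
    case: ifP => _ //.
    have := hpowN (i0 - k)%N (leq_trans (leq_subr _ _) (ltnW (ltn_ord i0))).
    lia.
  case: ifP => _ //.
  have : 0 <= (t + 1) ^+ (i0 - k) by apply: exprn_ge0; lia.
  lia.
move=> y hy hnd.
case: (boolP [exists i : 'I_k.+2, (rhsT d k t i)%:~R <
    \sum_(j < d) (\matrix_(i0 < k.+2, j0 < d) (coefT d k t i0 j0)%:~R : 'M[R]_(k.+2, d)) i j * (y 0 j)%:~R]).
  by case/existsP => i hi; exists i.
move/existsPn => hall.
exfalso; apply: hnd.
have hle : forall i : 'I_k.+2, \sum_(j < d) coefT d k t i j * y 0 j <= rhsT d k t i.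
  by move=> i; move: (hall i); rewrite -leNgt hsum ler_int.
pose Y := fun n : nat => if (insub n : option 'I_d) is Some o then y 0 o else 0.
have hYo : forall o : 'I_d, Y o = y 0 o by move=> o; rewrite /Y valK.
have hYd : forall j, (d <= j)%N -> Y j = 0.
  by move=> j hj; rewrite /Y insubF // ltnNge hj.
have hYb : forall j, - t <= Y j <= t.
  move=> j; rewrite /Y; case: (insub j) => [o|]; first by rewrite -ler_norml; apply: hy.
  apply/andP; split; lia.
have hsY : forall i : nat, \sum_(j < d) coefT d k t i j * y 0 j = \sum_(j < d) coefT d k t i j * Y j.
  by move=> i; apply: eq_bigr => j _; rewrite hYo.
have hP : forall p, (p < k)%N -> 0 <= (t + 1) * Y p + Y (k + p)%N.
  move=> p hp.
  have hp2 : (p < k.+2)%N by apply: (leq_trans hp); rewrite ltnW.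
  have := hle (Ordinal hp2); rewrite hsY /=.
  have hne : (p == (k + p)%N) = false.
    apply/negbTE/eqP => e; have : (0 < k)%N by apply: leq_ltn_trans hp.
    lia.
  have -> : \sum_(j < d) coefT d k t p j * Y j =
      \sum_(j < d) ((if (val j == p) then - (t + 1) * Y p else 0)
                   + (if (val j == (k + p)%N) then - Y (k + p)%N else 0)).
    apply: eq_bigr => j _; rewrite /coefT hp /=.
    case: eqP => [-> | hjp]; first by rewrite hne addr0.
    case: eqP => [-> | _]; first by rewrite add0r mulN1r.
    by rewrite mul0r addr0.
  rewrite big_split /= !sum_pick (leq_trans hp hkd) /rhsT hp.
  case: ifP => hkp; first lia.
  rewrite (hYd (k + p)%N); last by rewrite leqNgt hkp.
  lia.
have hk1 : (k < k.+2)%N by rewrite ltnW.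
have hGA := hle (Ordinal hk1).
rewrite hsY /= (bigID (fun j : 'I_d => (j < k)%N)) /= in hGA.
have e1 : \sum_(j < d | (j < k)%N) coefT d k t k j * Y j = Kv d t * \sum_(j < d | (j < k)%N) Y j.
  by rewrite mulr_sumr; apply: eq_bigr => j hj; rewrite /coefT ltnn eqxx hj.
have e2 : \sum_(j < d | ~~ (j < k)%N) coefT d k t k j * Y j =
    \sum_(j < d | ~~ (j < k)%N) (t + 1) ^+ (j - k) * Y j - Nv d t * \sum_(j < d | ~~ (j < k)%N) Y j.
  rewrite mulr_sumr -sumrB; apply: eq_bigr => j hj.
  by rewrite /coefT ltnn eqxx (negbTE hj) mulrBl.
rewrite e1 e2 addrA /rhsT ltnn in hGA.
have hGS := hle ord_max.
rewrite hsY /= (bigID (fun j : 'I_d => (j < k)%N)) /= in hGS.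
have h1 : (k.+1 < k)%N = false by apply/negbTE; rewrite -leqNgt ltnW.
have h2 : (k.+1 == k) = false by rewrite eqn_leq ltnn.
have e3 : \sum_(j < d | (j < k)%N) coefT d k t k.+1 j * Y j = Kv d t * \sum_(j < d | (j < k)%N) Y j.
  by rewrite mulr_sumr; apply: eq_bigr => j hj; rewrite /coefT h1 h2 hj.
have e4 : \sum_(j < d | ~~ (j < k)%N) coefT d k t k.+1 j * Y j =
    Kv d t * \sum_(j < d | ~~ (j < k)%N) Y j - Nv d t * \sum_(j < d | ~~ (j < k)%N) Y j
    - \sum_(j < d | ~~ (j < k)%N) (t + 1) ^+ (j - k) * Y j.
  rewrite !mulr_sumr -!sumrB; apply: eq_bigr => j hj.
  by rewrite /coefT h1 h2 (negbTE hj) !mulrBl.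
rewrite e3 e4 /rhsT h1 in hGS.
have hGS' : Kv d t * (\sum_(j < d | (j < k)%N) Y j + \sum_(j < d | ~~ (j < k)%N) Y j)
    - Nv d t * (\sum_(j < d | ~~ (j < k)%N) Y j)
    - \sum_(j < d | ~~ (j < k)%N) (t + 1) ^+ (j - k) * Y j <= Kv d t.
  by move: hGS; rewrite mulrDr !addrA.
case: (core ht hkd hdk hYb hYd hP (erefl _) (erefl _) hGA hGS') => [hall0 | [i [hi hYi]]].
  left; apply/rowP => j; rewrite !mxE -hYo hall0 //.
right; exists (Ordinal hi); apply/rowP => j.
rewrite /unitvec !mxE -hYo hYi.
by rewrite -val_eqE /= eq_sym.
Qed.

Theorem theorem3p4 (R : realType) (d : nat) (hd : (0 < d)%N) :
  exists r : nat, @rcl_is R d (@Delta d) r /\ (r <= (d.+1)./2 + 2)%N.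
Proof.
set k := (d.+1)./2.
have rc_ex : forall t : int, 0 < t ->
    exists n, @rc_is R d (@Delta d) (@Bbox d t) n /\ (n <= k.+2)%N.
  move=> t ht.
  have ex : exists n, `[< @has_relaxation_of_size R d (@Delta d) (@Bbox d t) n >].
    by exists k.+2; apply/asboolP; apply: construct.
  case: (ex_minnP ex) => n /asboolP Pn minn.
  exists n; split.
    split => // m Pm; apply: minn; exact/asboolP.
  by apply: minn; apply/asboolP; apply: construct.
have exS : exists n, `[< exists t : int, 0 < t /\ @rc_is R d (@Delta d) (@Bbox d t) n >].
  have [n [hn _]] := rc_ex 1 ltr01.
  by exists n; apply/asboolP; exists 1.
have ubS : forall n, `[< exists t : int, 0 < t /\ @rc_is R d (@Delta d) (@Bbox d t) n >] ->
    (n <= k.+2)%N.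
  move=> n /asboolP [t [ht [hrel hmin]]].
  by apply: hmin; apply: construct.
case: (ex_maxnP exS ubS) => r /asboolP Sr maxr.
exists r; split; last by rewrite addn2; apply: ubS; apply/asboolP.
split => //.
move=> t ht; have [n [hn _]] := rc_ex t ht.
exists n; split => //; apply: maxr; apply/asboolP; by exists t.
Qed.
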